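(* If $x_1:A_1,\dots,x_k:A_k\vdash t:A$ is derivable in $\mathbf{IL}_{\mathbf{at}}$, then the term $t$ of $A$ from $x_1:A_1,\dots,x_k:A_k$ is valid in every phase model $(D_{\mathcal M},* )$; that is, for all $(m_i\rhd t_i)\in A_i^*$ ($1\le i\le k$) we have $(m_1\cdots m_k\rhd t[x_1:=t_1,\dots,x_k:=t_k])\in A^*$.
   Context: System $\mathbf{IL}_{\mathbf{at}}$: formulas $A ::= X\mid A\to B\mid \forall X.A$ ($X$ atoms); terms $t ::= x\mid c^A\mid\lambda x.t\mid ts\mid\Lambda X.t\mid tX$ (a term-constant $c^A$ for each formula $A$; $tX$ only with $X$ an atom). $\Gamma\vdash t:A$ is derivable by: $\Gamma,x:A\vdash x:A$; $\Gamma\vdash c^A:A$; from $\Gamma,x:A\vdash t:B$ infer $\Gamma\vdash\lambda x.t:A\to B$; from $\Gamma\vdash t:A\to B$, $\Gamma\vdash s:A$ infer $\Gamma\vdash ts:B$; from $\Gamma\vdash t:A$ with $X$ not free in the formulas of $\Gamma$ infer $\Gamma\vdash\Lambda X.t:\forall X.A$; from $\Gamma\vdash t:\forall X.A$ infer $\Gamma\vdash tY:A[X:=Y]$ ($Y$ an atom). Substitutions are capture-avoiding. Phase space: an idempotent commutative monoid $\mathcal M=(M,\cdot,\varepsilon)$ ($m\cdot m=m$); domain $B_{\mathcal M}=\{(m\rhd t)\mid m\in M,\ t\text{ a term}\}$; $D_{\mathcal M}$ is the set of closed sets, i.e. subsets $\alpha\subseteq B_{\mathcal M}$ such that (Monotonicity)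 $(m\rhd t)\in\alpha$ implies $(m\cdot n\rhd t)\in\alpha$ for all $n\in M$, and (Expansion) for $T_1,\dots,T_k$ terms or atoms: (i) $(m\rhd t[x:=s]T_1\cdots T_k)\in\alpha$ implies $(m\rhd(\lambda x.t)sT_1\cdots T_k)\in\alpha$; (ii) $(m\rhd t[X:=Y]T_1\cdots T_k)\in\alpha$ implies $(m\rhd(\Lambda X.t)YT_1\cdots T_k)\in\alpha$. Phase model $(D_{\mathcal M},* )$: a phase space with an interpretation such that $X^*\in D_{\mathcal M}$ for every atom $X$; $(A\to B)^*=\{(m\rhd t)\mid (m\cdot n\rhd ts)\in B^*\text{ for all }(n\rhd s)\in A^*\}$; $(\forall X.A)^*=\{(m\rhd t)\mid (m\rhd tY)\in(A[X:=Y])^*\text{ for every atom }Y\}$; and $(\varepsilon\rhd c^A)\in A^*$ for every formula $A$. *)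

(* Defs.v *)
(* Syntax of IL_at in pure de Bruijn style (both term variables
   and atoms), which represents terms/formulas up to alpha-equivalence and
   makes all substitutions capture-avoiding by construction. *)
From Stdlib Require Import List.
Import ListNotations.

Definition scons {X : Type} (x : X) (f : nat -> X) : nat -> X :=
  fun n => match n with 0 => x | S k => f k end.

(** Formulas  A ::= X | A -> B | forall X. A
    Atoms are de Bruijn indices; a free index n denotes the (free) atom n. *)
Inductive form : Type :=
| Atom (X : nat)
| Imp (A B : form)
| All (A : form).

Definition upren (r : nat -> nat) : nat -> nat := scons 0 (fun k => S (r k)).

(* renaming of atoms (atoms are only ever replaced by atoms) *)
Fixpoint frename (r : nat -> nat) (A : form) : form :=
  match A with
  | Atom X => Atom (r X)
  | Imp A B => Imp (frename r A) (frename r B)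
  | All A => All (frename (upren r) A)
  end.

(* A[X:=Y] where X is the atom bound by the outer forall (index 0) *)
Definition fsubst1 (A : form) (Y : nat) : form := frename (scons Y (fun k => k)) A.

Inductive term : Type :=
| Var (x : nat)
| Cst (A : form)
| Lam (t : term)
| App (t s : term)
| TLam (t : term)
| TApp (t : term) (Y : nat).

Fixpoint trename (r : nat -> nat) (t : term) : term :=
  match t with
  | Var x => Var x
  | Cst A => Cst (frename r A)
  | Lam t => Lam (trename r t)
  | App t s => App (trename r t) (trename r s)
  | TLam t => TLam (trename (upren r) t)
  | TApp t Y => TApp (trename r t) (r Y)
  end.

Fixpoint vrename (r : nat -> nat) (t : term) : term :=
  match t with
  | Var x => Var (r x)
  | Cst A => Cst A
  | Lam t => Lam (vrename (upren r) t)
  | App t s => App (vrename r t) (vrename r s)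
  | TLam t => TLam (vrename r t)
  | TApp t Y => TApp (vrename r t) Y
  end.

Fixpoint subst (sg : nat -> term) (t : term) : term :=
  match t with
  | Var x => sg x
  | Cst A => Cst A
  | Lam t => Lam (subst (scons (Var 0) (fun k => vrename S (sg k))) t)
  | App t s => App (subst sg t) (subst sg s)
  | TLam t => TLam (subst (fun k => trename S (sg k)) t)
  | TApp t Y => TApp (subst sg t) Y
  end.

(* t[x:=s], x the variable bound by the outer lambda *)
Definition subst1 (t s : term) : term := subst (scons s Var) t.
(* t[X:=Y], X the atom bound by the outer Lambda *)
Definition tsubst1 (t : term) (Y : nat) : term := trename (scons Y (fun k => k)) t.

(** Typing of IL_at. A context x_1:A_1,...,x_k:A_k is a list of formulas;
    the variable Var i has the i-th formula of the list. *)
Inductive typed : list form -> term -> form -> Prop :=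
| ty_var : forall G i, i < length G -> typed G (Var i) (nth i G (Atom 0))
| ty_cst : forall G A, typed G (Cst A) A
| ty_lam : forall G t A B, typed (A :: G) t B -> typed G (Lam t) (Imp A B)
| ty_app : forall G t s A B, typed G t (Imp A B) -> typed G s A -> typed G (App t s) B
| ty_tlam : forall G t A,
    (* X (index 0) is fresh for the shifted context: "X not free in Gamma" *)
    typed (map (frename S) G) t A -> typed G (TLam t) (All A)
| ty_tapp : forall G t A Y, typed G t (All A) -> typed G (TApp t Y) (fsubst1 A Y).

Record ICMonoid : Type := {
  carrier :> Type;
  mop : carrier -> carrier -> carrier;
  munit : carrier;
  mop_assoc : forall a b c, mop a (mop b c) = mop (mop a b) c;
  mop_comm : forall a b, mop a b = mop b a;
  mop_unit : forall a, mop munit a = a;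
  mop_idem : forall a, mop a a = a
}.

Fixpoint mprod (M : ICMonoid) (m : nat -> carrier M) (k : nat) : carrier M :=
  match k with
  | 0 => munit M
  | S k => mop M (mprod M m k) (m k)
  end.

Inductive arg : Type := ATerm (s : term) | AAtom (Y : nat).

Definition app_arg (t : term) (a : arg) : term :=
  match a with ATerm s => App t s | AAtom Y => TApp t Y end.

Definition apps (t : term) (l : list arg) : term := fold_left app_arg l t.

(* subsets of B_M = { (m |> t) } *)
Definition phase_set (M : ICMonoid) := carrier M -> term -> Prop.

(* closed sets, i.e. elements of D_M *)
Definition closed_set (M : ICMonoid) (al : phase_set M) : Prop :=
  (forall m t n, al m t -> al (mop M m n) t) /\
  (forall m t s l, al m (apps (subst1 t s) l) -> al m (apps (App (Lam t) s) l)) /\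
  (forall m t Y l, al m (apps (tsubst1 t Y) l) -> al m (apps (TApp (TLam t) Y) l)).

Definition phase_model (M : ICMonoid) (star : form -> phase_set M) : Prop :=
  (forall X, closed_set M (star (Atom X))) /\
  (forall A B m t, star (Imp A B) m t <->
      (forall n s, star A n s -> star B (mop M m n) (App t s))) /\
  (forall A m t, star (All A) m t <->
      (forall Y, star (fsubst1 A Y) m (TApp t Y))) /\
  (forall A, star A (munit M) (Cst A)).

(* Main.v *)
Require Import Defs.
From Stdlib Require Import List Lia.
Import ListNotations.

Lemma frename_ext A : forall r r', (forall x, r x = r' x) -> frename r A = frename r' A.
Proof.
  induction A; simpl; intros r r' H; f_equal; auto.
  apply IHA; intros [|x]; cbn; congruence.
Qed.

Lemma frename_comp A : forall r r', frename r (frename r' A) = frename (fun x => r (r' x)) A.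
Proof.
  induction A; simpl; intros; f_equal; auto.
  rewrite IHA; apply frename_ext; intros [|x]; reflexivity.
Qed.

Lemma frename_id A : forall r, (forall x, r x = x) -> frename r A = A.
Proof.
  induction A; simpl; intros r H; f_equal; auto.
  apply IHA; intros [|x]; cbn; congruence.
Qed.

Lemma trename_ext t : forall r r', (forall x, r x = r' x) -> trename r t = trename r' t.
Proof.
  induction t; simpl; intros r r' H; f_equal; auto using frename_ext.
  apply IHt; intros [|x]; cbn; congruence.
Qed.

Lemma trename_comp t : forall r r', trename r (trename r' t) = trename (fun x => r (r' x)) t.
Proof.
  induction t; simpl; intros; f_equal; auto using frename_comp.
  rewrite IHt; apply trename_ext; intros [|x]; reflexivity.
Qed.

Lemma trename_id t : forall r, (forall x, r x = x) -> trename r t = t.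
Proof.
  induction t; simpl; intros r H; f_equal; auto using frename_id.
  apply IHt; intros [|x]; cbn; congruence.
Qed.

Lemma vrename_ext t : forall r r', (forall x, r x = r' x) -> vrename r t = vrename r' t.
Proof.
  induction t; simpl; intros r r' H; f_equal; auto.
  apply IHt; intros [|x]; cbn; congruence.
Qed.

Lemma vrename_comp t : forall r r', vrename r (vrename r' t) = vrename (fun x => r (r' x)) t.
Proof.
  induction t; simpl; intros; f_equal; auto.
  rewrite IHt; apply vrename_ext; intros [|x]; reflexivity.
Qed.

Lemma trename_vrename t : forall r p, trename r (vrename p t) = vrename p (trename r t).
Proof. induction t; simpl; intros; f_equal; auto. Qed.

Lemma subst_ext t : forall sg sg', (forall x, sg x = sg' x) -> subst sg t = subst sg' t.
Proof.
  induction t; simpl; intros sg sg' H; f_equal; auto.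
  - apply IHt; intros [|x]; cbn; congruence.
  - apply IHt; intros x; cbn; congruence.
Qed.

Lemma subst_id t : forall sg, (forall x, sg x = Var x) -> subst sg t = t.
Proof.
  induction t; simpl; intros sg H; f_equal; auto.
  - apply IHt; intros [|x]; cbn; rewrite ?H; reflexivity.
  - apply IHt; intros x; cbn; rewrite H; reflexivity.
Qed.

Lemma trename_subst t : forall r sg,
  trename r (subst sg t) = subst (fun k => trename r (sg k)) (trename r t).
Proof.
  induction t; simpl; intros; f_equal; auto.
  - rewrite IHt; apply subst_ext; intros [|x]; cbn; auto using trename_vrename.
  - rewrite IHt; apply subst_ext; intros x; cbn.
    rewrite !trename_comp; apply trename_ext; reflexivity.
Qed.

Lemma vrename_subst t : forall r sg, subst sg (vrename r t) = subst (fun k => sg (r k)) t.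
Proof.
  induction t; simpl; intros; f_equal; auto.
  - rewrite IHt; apply subst_ext; intros [|x]; reflexivity.
  - rewrite IHt; reflexivity.
Qed.

Lemma subst_vrename t : forall r sg, vrename r (subst sg t) = subst (fun k => vrename r (sg k)) t.
Proof.
  induction t; simpl; intros; f_equal; auto.
  - rewrite IHt; apply subst_ext; intros [|x]; cbn; auto.
    rewrite !vrename_comp; apply vrename_ext; reflexivity.
  - rewrite IHt; apply subst_ext; intros x; cbn.
    symmetry; apply trename_vrename.
Qed.

Lemma subst_comp t : forall sg1 sg2,
  subst sg2 (subst sg1 t) = subst (fun k => subst sg2 (sg1 k)) t.
Proof.
  induction t; simpl; intros; f_equal; auto.
  - rewrite IHt; apply subst_ext; intros [|x]; cbn; auto.
    rewrite vrename_subst, subst_vrename; apply subst_ext; reflexivity.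
  - rewrite IHt; apply subst_ext; intros x; cbn.
    symmetry; apply trename_subst.
Qed.

Lemma subst1_up u s sg :
  subst1 (subst (scons (Var 0) (fun k => vrename S (sg k))) u) s = subst (scons s sg) u.
Proof.
  unfold subst1; rewrite subst_comp; apply subst_ext; intros [|x]; cbn; auto.
  rewrite vrename_subst; apply subst_id; reflexivity.
Qed.

Fixpoint fsize (A : form) : nat :=
  match A with Atom _ => 1 | Imp A B => S (fsize A + fsize B) | All A => S (fsize A) end.

Lemma fsize_rename A : forall r, fsize (frename r A) = fsize A.
Proof. induction A; simpl; intros; auto. Qed.

Lemma apps_snoc t l a : apps t (l ++ [a]) = app_arg (apps t l) a.
Proof. unfold apps; rewrite fold_left_app; reflexivity. Qed.

Section Sem.
Variable M : ICMonoid.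
Variable star : form -> phase_set M.
Hypothesis HM : phase_model M star.

Lemma all_closed_n : forall n A, fsize A < n -> closed_set M (star A).
Proof.
  destruct HM as [Hat [Himp [Hall Hcst]]].
  induction n as [|n IH]; intros A Hs; [lia|].
  destruct A as [X|A B|A]; simpl in Hs.
  - apply Hat.
  - assert (HB : closed_set M (star B)) by (apply IH; lia).
    destruct HB as [Bm [Be1 Be2]].
    split; [|split].
    + intros m t k H. apply Himp; intros n' s Hs'.
      apply Himp with (n := n') (s := s) in H; [|exact Hs'].
      rewrite <- mop_assoc, (mop_comm M k n'), mop_assoc. apply Bm; exact H.
    + intros m t s l H. apply Himp; intros n' s' Hs'.
      apply Himp with (n := n') (s := s') in H; [|exact Hs'].
      change (App (apps (App (Lam t) s) l) s') with (app_arg (apps (App (Lam t) s) l) (ATerm s')).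
      rewrite <- apps_snoc. apply Be1. rewrite apps_snoc. exact H.
    + intros m t Y l H. apply Himp; intros n' s' Hs'.
      apply Himp with (n := n') (s := s') in H; [|exact Hs'].
      change (App (apps (TApp (TLam t) Y) l) s') with (app_arg (apps (TApp (TLam t) Y) l) (ATerm s')).
      rewrite <- apps_snoc. apply Be2. rewrite apps_snoc. exact H.
  - assert (HA : forall Y, closed_set M (star (fsubst1 A Y)))
      by (intros Y; apply IH; unfold fsubst1; rewrite fsize_rename; lia).
    split; [|split].
    + intros m t k H. apply Hall; intros Y.
      apply Hall with (Y := Y) in H. apply (HA Y); exact H.
    + intros m t s l H. apply Hall; intros Y.
      apply Hall with (Y := Y) in H.
      change (TApp (apps (App (Lam t) s) l) Y) with (app_arg (apps (App (Lam t) s) l) (AAtom Y)).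
      rewrite <- apps_snoc. apply (HA Y). rewrite apps_snoc. exact H.
    + intros m t Y' l H. apply Hall; intros Y.
      apply Hall with (Y := Y) in H.
      change (TApp (apps (TApp (TLam t) Y') l) Y) with (app_arg (apps (TApp (TLam t) Y') l) (AAtom Y)).
      rewrite <- apps_snoc. apply (HA Y). rewrite apps_snoc. exact H.
Qed.

Lemma all_closed A : closed_set M (star A).
Proof. apply (all_closed_n (S (fsize A))); lia. Qed.

Lemma mono A m t n : star A m t -> star A (mop M m n) t.
Proof. apply (all_closed A). Qed.

Lemma expand A m t s : star A m (subst1 t s) -> star A m (App (Lam t) s).
Proof. intro H. apply ((proj1 (proj2 (all_closed A))) m t s []). exact H. Qed.

Lemma texpand A m t Y : star A m (tsubst1 t Y) -> star A m (TApp (TLam t) Y).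
Proof. intro H. apply ((proj2 (proj2 (all_closed A))) m t Y []). exact H. Qed.

Lemma mprod_scons n m k : mprod M (scons n m) (S k) = mop M n (mprod M m k).
Proof.
  induction k; simpl.
  - rewrite mop_unit, mop_comm, mop_unit; reflexivity.
  - simpl in IHk. rewrite IHk, mop_assoc. reflexivity.
Qed.

Lemma mprod_factor m k i : i < k -> exists c, mprod M m k = mop M (m i) c.
Proof.
  induction k; intros H; [lia|].
  simpl. destruct (PeanoNat.Nat.eq_dec i k) as [->|Hne].
  - exists (mprod M m k). apply mop_comm.
  - destruct IHk as [c Hc]; [lia|]. rewrite Hc, <- mop_assoc. eexists; reflexivity.
Qed.

Lemma sound G t A : typed G t A ->
  forall r m sg,
    (forall i, i < length G -> star (nth i (map (frename r) G) (Atom 0)) (m i) (sg i)) ->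
    star (frename r A) (mprod M m (length G)) (subst sg (trename r t)).
Proof.
  destruct HM as [Hat [Himp [Hall Hcst]]].
  induction 1; intros r m sg Hsg; simpl.
  - destruct (mprod_factor m (length G) i H) as [c ->].
    apply mono. specialize (Hsg i H).
    rewrite (nth_indep _ _ (frename r (Atom 0))) in Hsg by (rewrite length_map; exact H).
    rewrite map_nth in Hsg. exact Hsg.
  - rewrite <- (mop_unit M (mprod M m (length G))). apply mono. apply Hcst.
  - apply Himp; intros n s Hs. apply expand. rewrite subst1_up.
    rewrite mop_comm, <- mprod_scons.
    apply (IHtyped r (scons n m) (scons s sg)).
    intros [|i] Hi; simpl; [exact Hs|]. apply Hsg. simpl in Hi; lia.
  - rewrite <- (mop_idem M (mprod M m (length G))).
    specialize (IHtyped1 r m sg Hsg). simpl in IHtyped1.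
    apply (proj1 (Himp _ _ _ _) IHtyped1). apply IHtyped2; exact Hsg.
  - apply Hall; intros Y. apply texpand.
    unfold tsubst1. rewrite trename_subst, trename_comp.
    assert (E1 : fsubst1 (frename (upren r) A) Y = frename (scons Y r) A).
    { unfold fsubst1. rewrite frename_comp. apply frename_ext; intros [|x]; reflexivity. }
    rewrite E1.
    rewrite (trename_ext t (fun x => scons Y (fun k => k) (upren r x)) (scons Y r))
      by (intros [|x]; reflexivity).
    rewrite (subst_ext _ _ sg) by (intros x; rewrite trename_comp; apply trename_id; reflexivity).
    assert (EL : length (map (frename S) G) = length G) by apply length_map.
    rewrite <- EL. apply IHtyped.
    intros i Hi. rewrite map_map.
    rewrite (map_ext (fun x => frename (scons Y r) (frename S x)) (frename r)).
    + apply Hsg; lia.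
    + intros a; rewrite frename_comp; apply frename_ext; reflexivity.
  - specialize (IHtyped r m sg Hsg). simpl in IHtyped.
    pose proof (proj1 (Hall _ _ _) IHtyped (r Y)) as IH2. clear IHtyped. rename IH2 into IHtyped.
    unfold fsubst1 in *. rewrite frename_comp.
    rewrite frename_comp in IHtyped.
    erewrite frename_ext; [exact IHtyped|]. intros [|x]; reflexivity.
Qed.

End Sem.

Theorem mainTheorem4 (G : list form) (t : term) (A : form) :
  typed G t A ->
  forall (M : ICMonoid) (star : form -> phase_set M),
    phase_model M star ->
    forall (m : nat -> carrier M) (sg : nat -> term),
      (forall i, i < length G -> star (nth i G (Atom 0)) (m i) (sg i)) ->
      star A (mprod M m (length G)) (subst sg t).
Proof.
  intros H M star HM m sg Hsg.
  pose proof (sound M star HM G t A H (fun x => x) m sg) as S'.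
  rewrite frename_id, trename_id in S' by reflexivity.
  apply S'. intros i Hi.
  rewrite (map_ext _ (fun x => x)) by (intros; apply frename_id; reflexivity).
  rewrite map_id. apply Hsg; exact Hi.
Qed.
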